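(* Let $w_0\in\mathbb{N}$ and $w=(w_1,\dots,w_n)\in\mathbb{N}^n$ with each $w_i\le 2^{n^2}$, let $M=cn$ for a sufficiently large absolute constant $c>0$, let $\lambda=M\|w\|_2$, and define $p_W(x)=\left(\sum_{i=1}^n w_ix_i-w_0\right)^2+\lambda\sum_{i=1}^n x_i(1-x_i)$, $f_W(x)=\mathrm{sign}(\tfrac12-p_W(x))$, and $\alpha_n=\frac12\left(1-\sqrt{1-2/\lambda}\right)$. If $x\in[0,1]^n$ is at $\ell_1$ distance more than $\alpha_n$ from every point of $\{0,1\}^n$, then $f_W(x)=-1$.
   Context: $\mathrm{sign}(0)=1$; $\|w\|_2$ is the Euclidean norm. *)

(* Defs.v *)
From HB Require Import structures.
From mathcomp Require Import all_boot all_order all_algebra.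
From mathcomp Require Import reals.
Set Implicit Arguments. Unset Strict Implicit. Unset Printing Implicit Defensive.
Import Order.TTheory GRing.Theory Num.Theory.
Local Open Scope ring_scope.

(* sign with the convention sign(0) = 1 *)
Definition sgn {R : realType} (t : R) : R := if 0 <= t then 1 else -1.

Definition norm2 {R : realType} {n : nat} (w : 'I_n -> nat) : R :=
  Num.sqrt (\sum_(i < n) ((w i)%:R) ^+ 2).

Definition lam {R : realType} (c : R) {n : nat} (w : 'I_n -> nat) : R :=
  (c * n%:R) * norm2 w.

Definition pW {R : realType} (c : R) {n : nat} (w0 : nat) (w : 'I_n -> nat)
  (x : 'I_n -> R) : R :=
  (\sum_(i < n) (w i)%:R * x i - w0%:R) ^+ 2
  + lam c w * \sum_(i < n) x i * (1 - x i).

Definition fW {R : realType} (c : R) {n : nat} (w0 : nat) (w : 'I_n -> nat)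
  (x : 'I_n -> R) : R := sgn (2^-1 - pW c w0 w x).

Definition alpha_n {R : realType} (c : R) {n : nat} (w : 'I_n -> nat) : R :=
  2^-1 * (1 - Num.sqrt (1 - 2 / lam c w)).

Definition l1dist {R : realType} {n : nat} (x : 'I_n -> R) (v : 'I_n -> bool) : R :=
  \sum_(i < n) `|x i - (v i)%:R|.

(* Main.v *)
Require Import Defs.
From HB Require Import structures.
From mathcomp Require Import all_boot all_order all_algebra.
From mathcomp Require Import reals.
From mathcomp Require Import ring lra.
Import Order.TTheory GRing.Theory Num.Theory.
Local Open Scope ring_scope.

Lemma sumsq_le (R : realType) (I : Type) (s : seq I) (f : I -> R) :
  (forall i, 0 <= f i) ->
  \sum_(i <- s) f i ^+ 2 <= (\sum_(i <- s) f i) ^+ 2.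
Proof.
move=> f0; elim: s => [|a s IH]; first by rewrite !big_nil expr0n.
rewrite !big_cons.
have hS : 0 <= \sum_(i <- s) f i by apply: sumr_ge0.
have := f0 a; nra.
Qed.

Theorem claim5p8 (R : realType) :
  exists c0 : R, 0 < c0 /\
  forall (c : R), c0 <= c ->
  forall (n w0 : nat) (w : 'I_n -> nat),
    (forall i, (w i <= 2 ^ (n ^ 2))%N) ->
    (exists i, w i != 0%N) ->
  forall x : 'I_n -> R,
    (forall i, 0 <= x i <= 1) ->
    (forall v : 'I_n -> bool, alpha_n c w < l1dist x v) ->
    fW c w0 w x = -1.
Proof.
exists 2; split; first by [].
move=> c c2 n w0 w _ [j wj] x x01 hd.
have hn : 1 <= (n%:R : R).
  by rewrite ler1n (leq_ltn_trans (leq0n j) (ltn_ord j)).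
have hN : 1 <= norm2 (R:=R) w.
  rewrite /norm2.
  set S := \sum_(i < n) _.
  have hS : 1 <= S.
    rewrite /S (bigD1 j) //=.
    have : 0 <= \sum_(i < n | i != j) ((w i)%:R : R) ^+ 2 by apply: sumr_ge0 => i _; apply: sqr_ge0.
    have : 1 <= ((w j)%:R : R) by rewrite (_ : 1 = 1%:R) // ler_nat lt0n.
    nra.
  have s0 := sqrtr_ge0 S.
  have s2 := sqr_sqrtr (le_trans ler01 hS).
  nra.
set l := lam c w.
have hl : 2 <= l.
  rewrite /l /lam.
  have hcn : 2 <= c * n%:R by nra.
  nra.
pose v := fun i => (2^-1 <= x i) : bool.
pose d := fun i => `|x i - (v i)%:R|.
have hdi : forall i, [/\ 0 <= d i, d i <= 2^-1 & d i * (1 - d i) = x i * (1 - x i)].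
  move=> i; rewrite /d /v; have /andP[h0 h1] := x01 i.
  case: (boolP (2^-1 <= x i)) => h /=.
    rewrite ler0_norm; last by lra.
    split; [lra | lra | ring].
  have h' : x i < 2^-1 by rewrite ltNge.
  rewrite subr0 ger0_norm //; split; lra.
set D := l1dist x v.
have hD : alpha_n c w < D by apply: hd.
have hDdef : D = \sum_(i < n) d i by [].
have hsum : \sum_(i < n) x i * (1 - x i) = D - \sum_(i < n) d i ^+ 2.
  rewrite hDdef -sumrB; apply: eq_bigr => i _.
  by case: (hdi i) => _ _ <-; ring.
have hsq1 : \sum_(i < n) d i ^+ 2 <= D ^+ 2.
  by rewrite hDdef; apply: sumsq_le => i; case: (hdi i).
have hsq2 : \sum_(i < n) d i ^+ 2 <= 2^-1 * D.
  rewrite hDdef mulr_sumr; apply: ler_sum => i _.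
  case: (hdi i) => h0 h1 _; rewrite expr2; nra.
set s := Num.sqrt (1 - 2 / l).
have hl0 : 0 < l by lra.
have harg : 0 <= 1 - 2 / l.
  rewrite subr_ge0 ler_pdivrMr //; lra.
have hs0 : 0 <= s by apply: sqrtr_ge0.
have hs2 : s ^+ 2 = 1 - 2 / l by apply: sqr_sqrtr.
have hs2' : s ^+ 2 * l = l - 2.
  by rewrite hs2 mulrBl mul1r mulfVK // gt_eqF.
have halpha : alpha_n c w = 2^-1 * (1 - s) by [].
rewrite halpha in hD.
have hs1 : s <= 1.
  have h2l : 0 <= 2 / l by apply: divr_ge0; lra.
  have : s ^+ 2 <= 1 by rewrite hs2; lra.
  nra.
have key : 2^-1 < l * (D - \sum_(i < n) d i ^+ 2).
  case: (lerP D (2^-1)) => hD2.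
  - have h1 : D * (1 - D) * l > 2^-1.
      have ha : (2^-1 * (1 - s)) * (1 - 2^-1 * (1 - s)) * l = 2^-1.
        have : (2^-1 * (1 - s)) * (1 - 2^-1 * (1 - s)) * l = (l - s^+2 * l) / 4.
          by rewrite expr2; field.
        by move=> ->; rewrite hs2'; field.
      have hpos : 0 < (D - 2^-1 * (1 - s)) * (1 - D - 2^-1 * (1 - s)) by nra.
      have : (D * (1 - D) - (2^-1 * (1 - s)) * (1 - 2^-1 * (1 - s))) * l > 0.
        apply: mulr_gt0 => //.
        have -> : D * (1 - D) - (2^-1 * (1 - s)) * (1 - 2^-1 * (1 - s)) =
                  (D - 2^-1 * (1 - s)) * (1 - D - 2^-1 * (1 - s)) by ring.
        exact: hpos.
      nra.
    nra.
  - nra.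
rewrite /fW /sgn /pW -/l.
rewrite hsum.
case: ifP => // h.
have : 0 <= (\sum_(i < n) (w i)%:R * x i - w0%:R) ^+ 2 by apply: sqr_ge0.
lra.
Qed.
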